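(* Let $\gamma_{\mathrm f} > 1$. Then the inequality \[ \prod_{i=1,2} \frac{1}{N_i} \frac{|\sin(N_i \bar{z}_i / 2)|}{|\sin(\bar{z}_i / 2)|} \geq \frac{1}{\sqrt{\gamma_{\mathrm f}}} \] holds whenever $\bar{z}_i\in\left[-\frac{2}{N_i} \alpha^{*}, \frac{2}{N_i} \alpha^{*}\right]$ for both $i = 1,2$. Here, $\alpha^{*}$ is the unique root of the equation \[ \frac{\sin(\alpha)}{\alpha} = \frac{1}{\sqrt[4]{\gamma_{\mathrm f}}} \] within the range $[0, \pi]$.
   Context: Consider an $N_1 \times N_2$ uniform rectangular antenna array (URA) with horizontal and vertical inter-element spacings $d_1, d_2$ and wavelength $\lambda$. A steering vector is aimed at direction $(\theta_x,\theta_y)$ (angles measured relative to the x- and y-axes), while the incident ray arrives from $(\theta_x+\Delta_x,\theta_y+\Delta_y)$. The resulting phase deviations are $\bar{z}_1 = \frac{2\pi}{\lambda}d_1[\sin(\theta_x+\Delta_x) - \sin(\theta_x)]$ and $\bar{z}_2 = \frac{2\pi}{\lambda}d_2[\sin(\theta_y+\Delta_y) - \sin(\theta_y)]$, and the ratio of achievable to maximum array gain is $\left(\prod_{i=1}^2\frac{1}{N_i}\frac{\sin(N_i\bar{z}_i/2)}{\sin(\bar{z}_i/2)}\right)^2$. The degradation factor threshold is $\gamma_{\mathrm f} = 10^{\gamma/10}$, where $\gamma$ is the allowed gain loss in dB; the gain loss stays within $\gamma$ dB iff this ratio is at least $1/\gamma_{\mathrm f}$, i.e. iff the product in the claim is at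 least $1/\sqrt{\gamma_{\mathrm f}}$. $N_1,N_2$ are positive integers. *)

(* Defs.v *)
From Stdlib Require Import Reals Lra.
Open Scope R_scope.

(* Normalized array-factor magnitude of a uniform linear array of N elements
   at phase deviation z:  (1/N) |sin(N z/2)| / |sin(z/2)|.
   At the removable singularities sin(z/2) = 0 (e.g. z = 0) we use the
   continuous extension, whose value is 1. *)
Definition af (N : nat) (z : R) : R :=
  if Req_EM_T (sin (z / 2)) 0 then 1
  else / INR N * (Rabs (sin (INR N * z / 2)) / Rabs (sin (z / 2))).

(* Main.v *)
Require Import Defs.
From Stdlib Require Import Reals.
From Coquelicot Require Import Coquelicot.
From Stdlib Require Import Lra Lia.
Open Scope R_scope.


Lemma kneg t : 0 <= t <= PI -> t * cos t - sin t <= 0.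
Proof.
  intros [H0 H1].
  destruct (MVT_gen (fun s => s * cos s - sin s) 0 t (fun s => - (s * sin s))) as [c [Hc Heq]].
  - intros x _. auto_derive; auto. ring.
  - intros x _. apply continuity_pt_filterlim. apply (ex_derive_continuous (fun s => s * cos s - sin s)). auto_derive; auto.
  - rewrite Rmin_left in Hc by lra. rewrite Rmax_right in Hc by lra.
    rewrite cos_0, sin_0 in Heq.
    assert (0 <= sin c) by (apply sin_ge_0; lra).
    assert (0 <= c * sin c) by (apply Rmult_le_pos; lra).
    assert (0 <= c * sin c * t) by (apply Rmult_le_pos; lra).
    lra.
Qed.

Lemma key x y : 0 < x <= y -> y <= PI -> x * sin y <= y * sin x.
Proof.
  intros [Hx Hxy] Hy.
  destruct (Req_dec x y) as [->|Hne]; [lra|].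
  destruct (MVT_gen (fun s => sin s / s) x y (fun s => (s * cos s - sin s) / (s*s))) as [c [Hc Heq]].
  - intros s Hs. rewrite Rmin_left in Hs by lra. auto_derive. lra. field. lra.
  - intros s Hs. rewrite Rmin_left in Hs by lra. apply continuity_pt_filterlim. apply (ex_derive_continuous (fun s => sin s / s)). auto_derive. lra.
  - rewrite Rmin_left in Hc by lra. rewrite Rmax_right in Hc by lra.
    assert (K := kneg c ltac:(lra)).
    assert ((c * cos c - sin c) / (c * c) <= 0).
    { unfold Rdiv. apply Rmult_le_0_r; [lra|]. apply Rlt_le, Rinv_0_lt_compat. nra. }
    assert (sin y / y - sin x / x <= 0) by nra.
    assert (sin y / y <= sin x / x) by lra.
    apply (Rmult_le_compat_r (x*y)) in H1; [|nra].
    replace (sin y / y * (x*y)) with (x * sin y) in H1 by (field; lra).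
    replace (sin x / x * (x*y)) with (y * sin x) in H1 by (field; lra).
    exact H1.
Qed.

Lemma abs_sin w : Rabs w <= PI -> Rabs (sin w) = sin (Rabs w).
Proof.
  intros H. destruct (Rle_or_lt 0 w).
  - rewrite (Rabs_pos_eq w) in * by lra. apply Rabs_pos_eq, sin_ge_0; lra.
  - rewrite (Rabs_left w) by lra. rewrite (Rabs_left w) in H by lra.
    assert (0 <= sin (- w)) by (apply sin_ge_0; lra). rewrite sin_neg in *. apply Rabs_left1; lra.
Qed.

Lemma sin_le_id u : 0 <= u -> sin u <= u.
Proof.
  intros H. destruct (Req_dec u 0) as [->|]; [rewrite sin_0; lra|].
  apply Rlt_le, sin_lt_x; lra.
Qed.

Lemma af_bound N z a : (0 < N)%nat -> 0 < a <= PI ->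
  - (2 / INR N) * a <= z <= (2 / INR N) * a -> sin a / a <= af N z.
Proof.
  intros HN Ha Hz.
  assert (HNr : 1 <= INR N) by (change 1 with (INR 1); apply le_INR; lia).
  assert (Hsa : sin a / a <= 1).
  { apply (Rmult_le_reg_r a); [lra|]. unfold Rdiv. rewrite Rmult_assoc, Rinv_l by lra.
    rewrite Rmult_1_r, Rmult_1_l. apply sin_le_id; lra. }
  unfold af. destruct (Req_EM_T (sin (z/2)) 0) as [E|E]; [exact Hsa|].
  set (u := Rabs (z/2)).
  assert (Hu : INR N * u <= a).
  { unfold u. apply (Rmult_le_reg_l (2 / INR N)). apply Rdiv_lt_0_compat; lra.
    replace (2 / INR N * (INR N * Rabs (z/2))) with (Rabs z).
    2:{ rewrite Rabs_div, (Rabs_pos_eq 2) by lra. field. lra. }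
    apply Rabs_le; lra. }
  assert (Hu0 : 0 < u).
  { unfold u. destruct (Req_dec (z/2) 0) as [E2|E2].
    - rewrite E2, sin_0 in E. lra.
    - apply Rabs_pos_lt; auto. }
  assert (HuN : u <= INR N * u) by nra.
  assert (Hsu : 0 < sin u).
  { unfold u. rewrite <- abs_sin by (fold u; lra). apply Rabs_pos_lt; auto. }
  rewrite (abs_sin (z/2)) by (fold u; lra).
  rewrite (abs_sin (INR N * z / 2)).
  2:{ replace (INR N * z / 2) with (INR N * (z/2)) by field.
      rewrite Rabs_mult, (Rabs_pos_eq (INR N)) by lra. fold u; lra. }
  replace (Rabs (INR N * z / 2)) with (INR N * u).
  2:{ unfold u. replace (INR N * z / 2) with (INR N * (z/2)) by field.
      rewrite Rabs_mult, (Rabs_pos_eq (INR N)) by lra. reflexivity. }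
  fold u.
  assert (Hsu2 : sin u <= u) by (apply sin_le_id; lra).
  assert (K := key (INR N * u) a ltac:(lra) ltac:(lra)).
  assert (HsN : 0 <= sin (INR N * u)) by (apply sin_ge_0; lra).
  apply (Rmult_le_reg_r (a * INR N * sin u)). 
  { apply Rmult_lt_0_compat; [|lra]. apply Rmult_lt_0_compat; lra. }
  replace (sin a / a * (a * INR N * sin u)) with (sin a * (INR N * sin u)) by (field; lra).
  replace (/ INR N * (sin (INR N * u) / sin u) * (a * INR N * sin u)) with (a * sin (INR N * u)) by (field; lra).
  assert (sin a * (INR N * sin u) <= sin a * (INR N * u)).
  { apply Rmult_le_compat_l. apply sin_ge_0; lra. nra. }
  nra.
Qed.

Theorem lemma2 (gf : R) (N1 N2 : nat) (alpha z1 z2 : R) :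
  1 < gf ->
  (0 < N1)%nat -> (0 < N2)%nat ->
  0 <= alpha <= PI ->
  sin alpha / alpha = / Rpower gf (1 / 4) ->
  - (2 / INR N1) * alpha <= z1 <= (2 / INR N1) * alpha ->
  - (2 / INR N2) * alpha <= z2 <= (2 / INR N2) * alpha ->
  af N1 z1 * af N2 z2 >= / sqrt gf.
Proof.
  intros Hg H1 H2 Ha Heq Hz1 Hz2.
  assert (Hp : 1 < Rpower gf (1/4)).
  { replace 1 with (Rpower gf 0) at 1 by (apply Rpower_O; lra). apply Rpower_lt; lra. }
  assert (Ha0 : 0 < alpha).
  { destruct (Req_dec alpha 0) as [E|E]; [|lra].
    rewrite E in Heq. unfold Rdiv in Heq. rewrite Rinv_0, Rmult_0_r in Heq.
    assert (0 < / Rpower gf (1/4)) by (apply Rinv_0_lt_compat; lra). lra. }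
  assert (B1 := af_bound N1 z1 alpha H1 ltac:(lra) Hz1).
  assert (B2 := af_bound N2 z2 alpha H2 ltac:(lra) Hz2).
  rewrite Heq in B1, B2.
  assert (Hs : / sqrt gf = / Rpower gf (1/4) * / Rpower gf (1/4)).
  { rewrite <- Rinv_mult, <- Rpower_plus, <- Rpower_sqrt by lra.
    f_equal. f_equal. field. }
  rewrite Hs.
  assert (0 < / Rpower gf (1/4)) by (apply Rinv_0_lt_compat; lra).
  apply Rle_ge. apply Rmult_le_compat; lra.
Qed.
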